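(* In the setting described in the context, for every $c_1^*\in\arg\min_{c'\in[K]\setminus\{c^*\}} P_1(c')$ we have $P_1(c_1^* )=P_2(c_1^* )$.
   Context: Let $N_p\ge 1$ and $K\ge 2$ be integers, and write $[m]=\{1,\dots,m\}$. Let real numbers $\rho_i^c$ be given for $i\in[N_p]$ and $c\in[K]$. A vote configuration is a matrix $\tilde V=(\tilde v_i^c)\in\{0,1\}^{N_p\times K}$ with $\sum_{c=1}^K \tilde v_i^c=1$ for every $i\in[N_p]$. Its cost is $O(\tilde V)=\sum_{i=1}^{N_p}\sum_{c=1}^K \rho_i^c\,\tilde v_i^c$. Let $\mathrm{majVote}(\tilde V)$ denote the smallest index among the maximizers of $c\mapsto \sum_{i=1}^{N_p}\tilde v_i^c$. Fix a class $c^*\in[K]$. For $c'\in[K]$ define: - $P_1(c')=\min\{O(\tilde V): \tilde V \text{ a vote configuration with } \sum_{i=1}^{N_p}(\tilde v_i^{c'}-\tilde v_i^{c})\ge \mathbf 1_{c<c'}\ \forall c\in[K]\setminus\{c'\}\}$. The constraint is equivalent to $\mathrm{majVote}(\tilde V)=c'$. - $P_2(c')=\min\{O(\tilde V): \tilde V \text{ a vote configuration with } \sum_{i=1}^{N_p}(\tilde v_i^{c'}-\tilde v_i^{c^*})\ge \mathbf 1_{c^*<c'}\}$. Here $\mathbf 1_{a<b}$ equals $1$ if $a<b$ and $0$ otherwise. *)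

(* Defs.v *)
From HB Require Import structures.
From mathcomp Require Import all_boot all_order all_algebra.
Set Implicit Arguments. Unset Strict Implicit. Unset Printing Implicit Defensive.
Import Order.TTheory GRing.Theory Num.Theory.
Local Open Scope ring_scope.

Section VoteDefs.
Variables (R : realFieldType) (Np K : nat).
Variable rho : 'I_Np -> 'I_K -> R.

Definition vote_config (V : 'M[bool]_(Np, K)) : bool :=
  [forall i, (\sum_(c < K) (V i c : nat))%N == 1%N].

Definition votes (V : 'M[bool]_(Np, K)) (c : 'I_K) : nat :=
  (\sum_(i < Np) (V i c : nat))%N.

Definition cost (V : 'M[bool]_(Np, K)) : R :=
  \sum_(i < Np) \sum_(c < K) rho i c * ((V i c : nat)%:R).

Definition feas1 (c' : 'I_K) : pred 'M[bool]_(Np, K) :=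
  fun V => vote_config V &&
    [forall c, (c != c') ==>
       ((((c < c')%N : nat)%:Z) <= (votes V c')%:Z - (votes V c)%:Z)].

Definition feas2 (cstar c' : 'I_K) : pred 'M[bool]_(Np, K) :=
  fun V => vote_config V &&
    ((((cstar < c')%N : nat)%:Z) <= (votes V c')%:Z - (votes V cstar)%:Z).

(* minimum of the cost over a (finite) feasible set; the default point is
   irrelevant whenever the feasible set is nonempty (always the case here). *)
Definition min_cost (S : pred 'M[bool]_(Np, K)) : R :=
  cost (Order.arg_min (const_mx false) S cost).

Definition P1 (c' : 'I_K) : R := min_cost (feas1 c').
Definition P2 (cstar c' : 'I_K) : R := min_cost (feas2 cstar c').
End VoteDefs.

(* Main.v *)
Require Import Defs.
From HB Require Import structures.
From mathcomp Require Import all_boot all_order all_algebra.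
From mathcomp Require Import zify.
Import Order.TTheory GRing.Theory Num.Theory.
Local Open Scope ring_scope.

Lemma argmin_indep (I : finType) d (T : orderType d) (i0 j : I) (P : pred I) (F : I -> T) :
  P j -> Order.arg_min i0 P F = Order.arg_min j P F.
Proof.
move=> Pj; rewrite /Order.arg_min /extremum.
case: pickP => [//|none].
have := @Order.TotalTheory.arg_minP _ _ I j P F Pj.
case=> i Pi mi; exfalso.
have := none i; rewrite /= Pi /=; move/negbT/negP; apply.
apply/forallP=> k; apply/implyP=> Pk; exact: mi.
Qed.
Lemma feas2_to1 (R : realFieldType) (Np K : nat) (rho : 'I_Np -> 'I_K -> R)
  (cstar c1 : 'I_K) (V : 'M[bool]_(Np, K)) :
  c1 != cstar -> feas2 cstar c1 V -> exists c', c' != cstar /\ feas1 c' V.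
Proof.
move=> Hne1; case/andP=> Hvc H2.
pose cm := [arg max_(c > c1) votes V c].
have Hcm : forall c, (votes V c <= votes V cm)%N.
  by rewrite /cm; case: arg_maxnP => // i _ Hi c; apply: Hi.
pose c' := [arg min_(c < cm | votes V c == votes V cm) (c : nat)].
have [Hc' Hmin] : votes V c' = votes V cm /\
    forall c, votes V c = votes V cm -> (c' <= c)%N.
  rewrite /c'; case: arg_minnP => // i /eqP Hi Hmi; split => // c Hc.
  by apply: Hmi; apply/eqP.
have Hlt : forall c : 'I_K, (c < c')%N -> (votes V c < votes V c')%N.
  move=> c Hc; rewrite ltn_neqAle Hc' Hcm andbT; apply/negP => /eqP E.
  by have := Hmin c E; rewrite leqNgt Hc.
exists c'; split.
  apply/negP => /eqP E; move: H2; rewrite -E.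
  have := Hcm c1; rewrite -Hc'.
  case: (ltngtP c' c1) => h.
  - by move=> a b; lia.
  - have := Hlt c1 h; move=> a b c; lia.
  - by move/val_inj: h => h; move: Hne1; rewrite -h E eqxx.
rewrite /feas1 Hvc /=; apply/forallP => c; apply/implyP => Hne.
case: (ltnP c c') => h.
  have := Hlt c h; move=> a; lia.
have := Hcm c; rewrite -Hc'; move=> a; lia.
Qed.

Definition W (Np : nat) {K : nat} (c : 'I_K) : 'M[bool]_(Np, K) := \matrix_(i, j) (j == c).

Lemma votesW (Np K : nat) (c d : 'I_K) :
  votes (W Np c) d = if d == c then Np else 0%N.
Proof.
rewrite /votes; under eq_bigr => i _ do rewrite /W mxE.
case: eqP => _ /=; last by rewrite big1.
by rewrite sum_nat_const card_ord muln1.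
Qed.

Lemma vcW (Np K : nat) (c : 'I_K) : vote_config (W Np c).
Proof.
apply/forallP => i; rewrite (bigD1 c) //= /W mxE eqxx big1 //.
by move=> j /negbTE Hj; rewrite mxE Hj.
Qed.

Lemma min_cost_spec (R : realFieldType) (Np K : nat) (rho : 'I_Np -> 'I_K -> R)
  (S : pred 'M[bool]_(Np, K)) V0 : S V0 ->
  exists A, [/\ S A, min_cost rho S = cost rho A & forall V, S V -> cost rho A <= cost rho V].
Proof.
move=> S0; rewrite /min_cost (@argmin_indep _ _ _ _ V0) //.
case: (@Order.TotalTheory.arg_minP _ _ _ V0 S (cost rho) S0) => A SA HA.
by exists A; split.
Qed.

Theorem lemma1p2 (R : realFieldType) (Np K : nat)
  (hNp : (1 <= Np)%N) (hK : (2 <= K)%N)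
  (rho : 'I_Np -> 'I_K -> R) (cstar c1 : 'I_K) :
  c1 != cstar ->
  (forall c : 'I_K, c != cstar -> P1 rho c1 <= P1 rho c) ->
  P1 rho c1 = P2 rho cstar c1.
Proof.
move=> Hne Hmin.
have F1 : forall c : 'I_K, feas1 c (W Np c).
  move=> c; rewrite /feas1 vcW /=; apply/forallP => d; apply/implyP => Hd.
  rewrite !votesW eqxx (negbTE Hd); case: ltnP => _; lia.
have F12 : forall V : 'M[bool]_(Np, K), feas1 c1 V -> feas2 cstar c1 V.
  move=> V; rewrite /feas1 /feas2 /= => /andP[Hv /forallP H]; rewrite Hv /=.
  by have := H cstar; rewrite eq_sym Hne.
have [A [SA EA HA]] := (@min_cost_spec R Np K rho _ _) (F1 c1).
have [B [SB EB HB]] := (@min_cost_spec R Np K rho _ _) (F12 _ (F1 c1)).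
rewrite /P1 /P2 EA EB; apply/eqP; rewrite eq_le; apply/andP; split.
  have [c' [Hc' Fc']] := @feas2_to1 R Np K rho _ _ _ Hne SB.
  have [C [SC EC HC]] := (@min_cost_spec R Np K rho _ _) Fc'.
  apply: le_trans (HC _ Fc').
  have := Hmin c' Hc'; rewrite /P1 EA EC; exact.
exact: HB (F12 _ SA).
Qed.
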